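(* Let $\pi \triangleright \Gamma \vdash^{(m,e)} t : L$ be a type derivation in the silly multi type system, with $L$ a linear type. (1) If $t \to_{wm} u$ then $m\geq 1$ and there is a derivation $\rho \triangleright \Gamma\vdash^{(m',e)} u : L$ with $m > m'$. (2) If $t\to_{we} u$ then $e\geq 1$ and there is a derivation $\rho\triangleright \Gamma\vdash^{(m,e')} u : L$ with $e>e'$. (3) If $t\to_{wgcv} u$ then there is a derivation $\rho\triangleright\Gamma\vdash^{(m,e)} u : L$ with $|\pi|>|\rho|$.
   Context: Terms: $t ::= x \mid \lambda x.t \mid t\,u \mid t[x\backslash u]$ ($t[x\backslash u]$ an explicit substitution binding $x$ in $t$; terms up to $\alpha$). Values $v ::= \lambda x.t$. Substitution contexts $S ::= \langle\cdot\rangle\mid S[x\backslash u]$. Weak contexts $W ::= \langle\cdot\rangle \mid W\,t \mid t\,W \mid t[x\backslash W] \mid W[x\backslash u]$; $W\langle\langle t\rangle\rangle$ is plugging without capture of free variables of $t$. Root rules: $S\langle\lambda x.t\rangle u\mapsto_m S\langle t[x\backslash u]\rangle$; $W\langle\langle x\rangle\rangle[x\backslash u]\mapsto_e W\langle\langle u\rangle\rangle[x\backslash u]$; $t[x\backslash S\langle v\rangle]\mapsto_{gcv} S\langle t\rangle$ if $x\notin\mathrm{fv}(t)$. $\to_{wm},\to_{we},\to_{wgcv}$ are their closures under weak contexts. Silly multi types: linear types $L ::= \mathtt{n} \mid M\multimap L$; multi types $M ::= [L_i]_{i\in I}$ finite multisets ($\mathbf{0}$ the empty one, $\uplus$ multiset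 sum). A type context $\Gamma$ maps variables to multi types, with finite domain $\{x\mid \Gamma(x)\neq\mathbf{0}\}$; $\uplus$ extends pointwise; $\Gamma\setminus\!\!\setminus x$ is $\Gamma$ with $x$ mapped to $\mathbf{0}$. Judgements $\Gamma\vdash^{(m,e)} t : T$ with $T$ linear or multi. Rules: (ax) $x:[L]\vdash^{(0,1)} x:L$; (many) from $(\Gamma_i\vdash^{(m_i,e_i)} t : L_i)_{i\in I}$, $I$ finite possibly empty, infer $\uplus_i\Gamma_i\vdash^{(\sum m_i,\sum e_i)} t : [L_i]_{i\in I}$; ($\mathrm{ax}_\lambda$) $\vdash^{(0,0)}\lambda x.t:\mathtt{n}$ with empty context; ($\lambda$) from $\Gamma\vdash^{(m,e)}t:L$ infer $\Gamma\setminus\!\!\setminus x\vdash^{(m,e)}\lambda x.t:\Gamma(x)\multimap L$; (@) from $\Gamma\vdash^{(m,e)} t : M\multimap L$ and $\Delta\vdash^{(m',e')} u : M\uplus[\mathtt{n}]$ infer $\Gamma\uplus\Delta\vdash^{(m+m'+1,e+e')} tu : L$; (ES) from $\Gamma\vdash^{(m,e)} t:L$ and $\Delta\vdash^{(m',e')}u:\Gamma(x)\uplus[\mathtt{n}]$ infer $(\Gamma\setminus\!\!\setminus x)\uplus\Delta\vdash^{(m+m',e+e')} t[x\backslash u]:L$. The size $|\pi|$ of a derivation is its number of rule instances other than (many). *)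

(* Defs.v *)
From Stdlib Require Import Arith List Permutation.
Import ListNotations.

(* [Es t u] represents t[x\u], where x is the index 0 bound in t. *)
Inductive term : Type :=
| Var : nat -> term
| Lam : term -> term
| App : term -> term -> term
| Es  : term -> term -> term.

Definition upren (f : nat -> nat) : nat -> nat :=
  fun i => match i with 0 => 0 | S i => S (f i) end.

Fixpoint ren (f : nat -> nat) (t : term) : term :=
  match t with
  | Var i => Var (f i)
  | Lam b => Lam (ren (upren f) b)
  | App a b => App (ren f a) (ren f b)
  | Es b u => Es (ren (upren f) b) (ren f u)
  end.

Definition lift (k : nat) (t : term) : term := ren (fun i => i + k) t.

Fixpoint occurs (k : nat) (t : term) : Prop :=
  match t with
  | Var i => i = k
  | Lam b => occurs (S k) b
  | App a b => occurs k a \/ occurs k b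
  | Es b u => occurs (S k) b \/ occurs k u
  end.

Definition is_value (t : term) : Prop := exists b, t = Lam b.

(** Substitution contexts S ::= <.> | S[x\u]; the head of the list is
    the outermost substitution. *)
Definition sctx := list term.
Fixpoint plugS (s : sctx) (t : term) : term :=
  match s with
  | [] => t
  | u :: s' => Es (plugS s' t) u
  end.

Inductive wctx : Type :=
| WHole : wctx
| WAppL : wctx -> term -> wctx
| WAppR : term -> wctx -> wctx
| WEsArg : term -> wctx -> wctx
| WEsBody : wctx -> term -> wctx.

(** Plugging (in de Bruijn notation, the plugged term is expressed in the
    scope of the hole). *)
Fixpoint plugW (w : wctx) (t : term) : term :=
  match w with
  | WHole => t
  | WAppL w' u => App (plugW w' t) u
  | WAppR u w' => App u (plugW w' t)
  | WEsArg u w' => Es u (plugW w' t)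
  | WEsBody w' u => Es (plugW w' t) u
  end.

(** Number of binders of W above its hole. *)
Fixpoint wdepth (w : wctx) : nat :=
  match w with
  | WHole => 0
  | WAppL w' _ => wdepth w'
  | WAppR _ w' => wdepth w'
  | WEsArg _ w' => wdepth w'
  | WEsBody w' _ => S (wdepth w')
  end.

(* S<\x.t> u  |->m  S<t[x\u]> *)
Inductive root_m : term -> term -> Prop :=
| Root_m : forall (s : sctx) (t u : term),
    root_m (App (plugS s (Lam t)) u) (plugS s (Es t (lift (length s) u))).

(* W<<x>>[x\u]  |->e  W<<u>>[x\u] *)
Inductive root_e : term -> term -> Prop :=
| Root_e : forall (w : wctx) (u : term),
    root_e (Es (plugW w (Var (wdepth w))) u)
           (Es (plugW w (lift (S (wdepth w)) u)) u).

(* t[x\S<v>]  |->gcv  S<t>   if x not in fv(t).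
   Since index 0 is not free in t, [ren pred t] is t with x removed
   from its scope; it is then lifted over the binders of S. *)
Inductive root_gcv : term -> term -> Prop :=
| Root_gcv : forall (s : sctx) (t v : term),
    is_value v -> ~ occurs 0 t ->
    root_gcv (Es t (plugS s v)) (plugS s (lift (length s) (ren pred t))).

Definition wclosure (r : term -> term -> Prop) (t u : term) : Prop :=
  exists (w : wctx) (t0 u0 : term), r t0 u0 /\ t = plugW w t0 /\ u = plugW w u0.

Definition wm := wclosure root_m.
Definition we := wclosure root_e.
Definition wgcv := wclosure root_gcv.

(* A multi type [L_i]_i is represented by a list, taken up to permutation:
   every rule below is stated modulo permutation (Permutation), so that
   derivability does not depend on the chosen representative. *)
Inductive ltype : Type :=
| TN : ltype
| TArr : list ltype -> ltype -> ltype.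

Definition mtype := list ltype.

(** Type contexts: index -> multi type (finite support for derivable
    judgements). *)
Definition ctx := nat -> mtype.
Definition ctx_eq (G D : ctx) : Prop := forall y, Permutation (G y) (D y).
Definition cempty : ctx := fun _ => [].
Definition csingle (x : nat) (L : ltype) : ctx :=
  fun y => if Nat.eqb y x then [L] else [].
Definition cunion (G D : ctx) : ctx := fun y => G y ++ D y.
(* Gamma \\ x for x the de Bruijn index 0 of the binder, re-indexed *)
Definition ctail (G : ctx) : ctx := fun y => G (S y).

(** Judgements [deriv G t m e s L]: there is a derivation of size s of
    G |-^(m,e) t : L; [mderiv] is the same for multi types (rule many,
    which is not counted in the size). *)
Inductive deriv : ctx -> term -> nat -> nat -> nat -> ltype -> Prop :=
| D_ax : forall G x L,
    ctx_eq G (csingle x L) ->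
    deriv G (Var x) 0 1 1 L
| D_axlam : forall G t,
    ctx_eq G cempty ->
    deriv G (Lam t) 0 0 1 TN
| D_lam : forall G G' t m e s L M,
    deriv G t m e s L ->
    Permutation M (G 0) ->
    ctx_eq G' (ctail G) ->
    deriv G' (Lam t) m e (S s) (TArr M L)
| D_app : forall G D G' t u m e s m' e' s' M M' L,
    deriv G t m e s (TArr M L) ->
    mderiv D u m' e' s' M' ->
    Permutation M' (M ++ [TN]) ->
    ctx_eq G' (cunion G D) ->
    deriv G' (App t u) (m + m' + 1) (e + e') (s + s' + 1) L
| D_es : forall G D G' t u m e s m' e' s' M' L,
    deriv G t m e s L ->
    mderiv D u m' e' s' M' ->
    Permutation M' (G 0 ++ [TN]) ->
    ctx_eq G' (cunion (ctail G) D) ->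
    deriv G' (Es t u) (m + m') (e + e') (s + s' + 1) L
with mderiv : ctx -> term -> nat -> nat -> nat -> mtype -> Prop :=
| M_nil : forall G t,
    ctx_eq G cempty ->
    mderiv G t 0 0 0 []
| M_cons : forall G G1 G2 t m1 e1 s1 m2 e2 s2 L M,
    deriv G1 t m1 e1 s1 L ->
    mderiv G2 t m2 e2 s2 M ->
    ctx_eq G (cunion G1 G2) ->
    mderiv G t (m1 + m2) (e1 + e2) (s1 + s2) (L :: M).

(* Main.v *)
Require Import Defs.
From Stdlib Require Import Arith List Permutation Lia ClassicalEpsilon.
Import ListNotations.

Definition ltd : forall x y : ltype, {x = y} + {x <> y} :=
  fun x y => excluded_middle_informative (x = y).

Ltac psolve :=
  apply (proj2 (Permutation_count_occ ltd _ _)); let z := fresh "z" in intro z;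
  repeat match goal with H : Permutation _ _ |- _ =>
      pose proof (proj1 (Permutation_count_occ ltd _ _) H z); clear H end;
  repeat rewrite count_occ_app in *; simpl in *; lia.

Lemma ctx_eq_refl G : ctx_eq G G.
Proof. intro; apply Permutation_refl. Qed.
Lemma ctx_eq_sym G D : ctx_eq G D -> ctx_eq D G.
Proof. intros H y; apply Permutation_sym, H. Qed.
Lemma ctx_eq_trans G D E : ctx_eq G D -> ctx_eq D E -> ctx_eq G E.
Proof. intros H1 H2 y; eapply Permutation_trans; [apply H1|apply H2]. Qed.

Lemma deriv_conv G t m e s L G' m' e' s' :
  deriv G t m e s L -> ctx_eq G G' -> m = m' -> e = e' -> s = s' -> deriv G' t m' e' s' L.
Proof.
  intros H HG <- <- <-; destruct H.
  - apply D_ax; eapply ctx_eq_trans; [apply ctx_eq_sym, HG|assumption].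
  - apply D_axlam; eapply ctx_eq_trans; [apply ctx_eq_sym, HG|assumption].
  - eapply D_lam; eauto. eapply ctx_eq_trans; [apply ctx_eq_sym, HG|assumption].
  - eapply D_app; eauto. eapply ctx_eq_trans; [apply ctx_eq_sym, HG|assumption].
  - eapply D_es; eauto. eapply ctx_eq_trans; [apply ctx_eq_sym, HG|assumption].
Qed.

Lemma mderiv_conv G t m e s M G' m' e' s' :
  mderiv G t m e s M -> ctx_eq G G' -> m = m' -> e = e' -> s = s' -> mderiv G' t m' e' s' M.
Proof.
  intros H HG <- <- <-; destruct H.
  - apply M_nil; eapply ctx_eq_trans; [apply ctx_eq_sym, HG|assumption].
  - eapply M_cons; eauto. eapply ctx_eq_trans; [apply ctx_eq_sym, HG|assumption].
Qed.

Scheme deriv_mut := Induction for deriv Sort Prop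
with mderiv_mut := Induction for mderiv Sort Prop.

Definition push (pre : nat -> list nat) (G : ctx) : ctx := fun y => concat (map G (pre y)).
Definition pre_ok (f : nat -> nat) (pre : nat -> list nat) :=
  forall y, NoDup (pre y) /\ forall x, In x (pre y) <-> f x = y.
Definition upre (pre : nat -> list nat) : nat -> list nat :=
  fun y => match y with 0 => [0] | S y => map S (pre y) end.

Lemma upre_ok f pre : pre_ok f pre -> pre_ok (upren f) (upre pre).
Proof.
  intros H [|y]; simpl.
  - split. constructor. intros []. constructor.
    intros x; split. intros [<-|[]]; reflexivity. destruct x; simpl; [auto|discriminate].
  - destruct (H y) as [Hn Hi]. split.
    + apply FinFun.Injective_map_NoDup; [intros a b; congruence|assumption].
    + intros x; rewrite in_map_iff; split.
      * intros [x' [<- Hx']]. simpl. f_equal. apply Hi; assumption.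
      * destruct x; simpl; [discriminate|]. intros Hx; exists x; split; auto. apply Hi; congruence.
Qed.

Lemma push_ctx_eq pre G D : ctx_eq G D -> ctx_eq (push pre G) (push pre D).
Proof.
  intros H y; unfold push; induction (pre y); simpl; [constructor|].
  apply Permutation_app; auto.
Qed.

Lemma push_union pre G D : ctx_eq (push pre (cunion G D)) (cunion (push pre G) (push pre D)).
Proof.
  intros y; unfold push, cunion; induction (pre y); simpl; [constructor|].
  rewrite IHl. psolve.
Qed.

Lemma push_empty pre : ctx_eq (push pre cempty) cempty.
Proof.
  intros y; unfold push, cempty; induction (pre y); simpl; auto.
Qed.

Lemma concat_single x L l : NoDup l ->
  concat (map (csingle x L) l) = if in_dec Nat.eq_dec x l then [L] else [].
Proof.
  induction 1; simpl; auto.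
  unfold csingle at 1. destruct (Nat.eqb_spec x0 x); subst.
  - destruct (in_dec Nat.eq_dec x l); [contradiction|]. rewrite IHNoDup.
    destruct (Nat.eq_dec x x); [|congruence]. reflexivity.
  - rewrite IHNoDup. simpl. destruct (Nat.eq_dec x0 x); [congruence|].
    destruct (in_dec Nat.eq_dec x l); reflexivity.
Qed.

Lemma push_single f pre x L : pre_ok f pre -> ctx_eq (push pre (csingle x L)) (csingle (f x) L).
Proof.
  intros H y. unfold push. destruct (H y) as [Hn Hi]. rewrite concat_single by auto.
  unfold csingle. destruct (in_dec Nat.eq_dec x (pre y)) as [Hx|Hx].
  - apply Hi in Hx; subst; rewrite Nat.eqb_refl; apply Permutation_refl.
  - destruct (Nat.eqb_spec y (f x)); [|apply Permutation_refl]. exfalso; apply Hx, Hi; auto.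
Qed.

Lemma push_tail pre G : ctx_eq (ctail (push (upre pre) G)) (push pre (ctail G)).
Proof.
  intros y; unfold ctail, push; simpl. rewrite map_map. apply Permutation_refl.
Qed.

Lemma ren_deriv : forall G t m e s L, deriv G t m e s L ->
  forall f pre, pre_ok f pre -> deriv (push pre G) (ren f t) m e s L.
Proof.
  apply (deriv_mut
    (fun G t m e s L _ => forall f pre, pre_ok f pre -> deriv (push pre G) (ren f t) m e s L)
    (fun G t m e s M _ => forall f pre, pre_ok f pre -> mderiv (push pre G) (ren f t) m e s M));
  intros; simpl.
  - apply D_ax. eapply ctx_eq_trans; [apply push_ctx_eq; eauto|]. apply push_single; auto.
  - apply D_axlam. eapply ctx_eq_trans; [apply push_ctx_eq; eauto|]. apply push_empty.
  - eapply D_lam. apply H. apply upre_ok; eauto.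
    + unfold push; simpl. rewrite app_nil_r; auto.
    + eapply ctx_eq_trans; [apply push_ctx_eq; eauto|]. apply ctx_eq_sym, push_tail.
  - eapply D_app; eauto.
    eapply ctx_eq_trans; [apply push_ctx_eq; eauto|]. apply push_union.
  - eapply D_es. apply H. apply upre_ok; eauto. apply H0; eauto.
    + unfold push; simpl. rewrite app_nil_r; auto.
    + eapply ctx_eq_trans; [apply push_ctx_eq; eauto|].
      eapply ctx_eq_trans; [apply push_union|].
      intros y; unfold cunion. apply Permutation_app; [apply Permutation_sym, push_tail|apply Permutation_refl].
  - apply M_nil. eapply ctx_eq_trans; [apply push_ctx_eq; eauto|]. apply push_empty.
  - eapply M_cons; eauto.
    eapply ctx_eq_trans; [apply push_ctx_eq; eauto|]. apply push_union.
Qed.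

Lemma ren_mderiv : forall G t m e s M, mderiv G t m e s M ->
  forall f pre, pre_ok f pre -> mderiv (push pre G) (ren f t) m e s M.
Proof.
  induction 1; intros.
  - apply M_nil. eapply ctx_eq_trans; [apply push_ctx_eq; eauto|]. apply push_empty.
  - eapply M_cons; [eapply ren_deriv; eauto| eauto |].
    eapply ctx_eq_trans; [apply push_ctx_eq; eauto|]. apply push_union.
Qed.

Lemma relevance : forall G t m e s L, deriv G t m e s L -> forall x, ~ occurs x t -> G x = [].
Proof.
  apply (deriv_mut
    (fun G t m e s L _ => forall x, ~ occurs x t -> G x = [])
    (fun G t m e s M _ => forall x, ~ occurs x t -> G x = [])); intros; simpl in *.
  - apply Permutation_nil. specialize (c x0). unfold csingle in c.
    destruct (Nat.eqb_spec x0 x); [congruence|]. apply Permutation_sym; auto.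
  - apply Permutation_nil, Permutation_sym, c.
  - apply Permutation_nil. specialize (c x). unfold ctail in c. rewrite (H (S x)) in c; auto.
    apply Permutation_sym; auto.
  - apply Permutation_nil. specialize (c x). unfold cunion in c.
    rewrite H, H0 in c by tauto. apply Permutation_sym; auto.
  - apply Permutation_nil. specialize (c x). unfold cunion, ctail in c.
    rewrite H, H0 in c by tauto. apply Permutation_sym; auto.
  - apply Permutation_nil, Permutation_sym, c.
  - apply Permutation_nil. specialize (c x). unfold cunion in c.
    rewrite H, H0 in c by tauto. apply Permutation_sym; auto.
Qed.

Lemma mderiv_nil_inv G t m e s : mderiv G t m e s [] -> ctx_eq G cempty /\ m = 0 /\ e = 0 /\ s = 0.
Proof. inversion 1; auto. Qed.

Lemma mderiv_perm M M' : Permutation M M' -> forall G t m e s, mderiv G t m e s M -> mderiv G t m e s M'.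
Proof.
  induction 1; intros G t m e s Hd; auto.
  - inversion Hd; subst. eapply M_cons; eauto.
  - inversion Hd; subst. inversion H7; subst.
    eapply mderiv_conv. eapply M_cons; [eassumption| |apply ctx_eq_refl].
    eapply M_cons; [eassumption|eassumption|apply ctx_eq_refl].
    intros z; specialize (H8 z); specialize (H11 z); unfold cunion in *. psolve.
    lia. lia. lia.
Qed.

Lemma mderiv_split A : forall B G t m e s, mderiv G t m e s (A ++ B) ->
  exists GA GB mA eA sA mB eB sB, mderiv GA t mA eA sA A /\ mderiv GB t mB eB sB B /\ ctx_eq G (cunion GA GB) /\ m = mA + mB /\ e = eA + eB /\ s = sA + sB.
Proof.
  induction A; simpl; intros.
  - exists cempty, G, 0, 0, 0, m, e, s. repeat split; auto. apply M_nil, ctx_eq_refl.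
    intro; apply Permutation_refl.
  - inversion H as [|? G1 G2 ? m1 e1 s1 m2 e2 s2 ? ? Hd Hm Hc]; subst.
    apply IHA in Hm as (GA&GB&mA&eA&sA&mB&eB&sB&H1&H2&H3&->&->&->).
    exists (cunion G1 GA), GB, (m1 + mA), (e1 + eA), (s1 + sA), mB, eB, sB.
    split; [eapply M_cons; [eassumption|eassumption|apply ctx_eq_refl]|].
    split; [assumption|]. split; [|lia].
    intros z; specialize (Hc z); specialize (H3 z); unfold cunion in *. psolve.
Qed.

Lemma app_eq_nil' (l1 l2 : list ltype) : Permutation [] (l1 ++ l2) -> l1 = [] /\ l2 = [].
Proof. intros H; apply Permutation_nil in H; apply app_eq_nil; auto. Qed.

Lemma plugS_inv : forall s X G m e sz L, deriv G (plugS s X) m e sz L ->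
 exists H K mX eX sX mK eK sK, deriv H X mX eX sX L /\
   ctx_eq G (fun y => H (y + length s) ++ K y) /\ m = mX + mK /\ e = eX + eK /\ sz = sX + sK /\
 forall Y H' mY eY sY L', deriv H' Y mY eY sY L' ->
   (forall y, y < length s -> Permutation (H' y) (H y)) ->
   deriv (fun y => H' (y + length s) ++ K y) (plugS s Y) (mY + mK) (eY + eK) (sY + sK) L'.
Proof.
  induction s as [|u s IH]; simpl; intros X G m e sz L Hd.
  - exists G, cempty, m, e, sz, 0, 0, 0. split; [auto|]. split.
    { intros y; rewrite Nat.add_0_r; unfold cempty; rewrite app_nil_r; apply Permutation_refl. }
    split; [lia|]. split; [lia|]. split; [lia|].
    intros Y H' mY eY sY L' HY _. eapply deriv_conv; [eassumption| |lia|lia|lia].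
    intros y; rewrite Nat.add_0_r; unfold cempty; rewrite app_nil_r; apply Permutation_refl.
  - inversion Hd as [| |? ? ? ? ? ? ? ? ?|? ? ? ? ? ? ? ? ? ? ? ? ? ? ?|G1 D ? ? ? m1 e1 s1 m2 e2 s2 M' ? H1 H2 H3 H4]; subst.
    apply IH in H1 as (H&K&mX&eX&sX&mK&eK&sK&HX&HG&->&->&->&Hrep).
    exists H, (fun y => K (S y) ++ D y), mX, eX, sX, (mK + m2), (eK + e2), (sK + s2 + 1).
    split; [auto|]. split.
    { intros y. specialize (H4 y); specialize (HG (S y)). unfold cunion, ctail in *.
      replace (S y + length s) with (y + S (length s)) in HG by lia. psolve. }
    split; [lia|]. split; [lia|]. split; [lia|].
    intros Y H' mY eY sY L' HY Hag.
    assert (HY' := Hrep Y H' mY eY sY L' HY (fun y Hy => Hag y (le_S _ _ Hy))).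
    eapply deriv_conv. eapply D_es; [exact HY'|exact H2| |apply ctx_eq_refl].
    { specialize (Hag (length s) (Nat.lt_succ_diag_r _)). specialize (HG 0). simpl in HG. psolve. }
    { intros y; unfold cunion, ctail.
      replace (S y + length s) with (y + S (length s)) by lia. psolve. }
    lia. lia. lia.
Qed.

Definition pre_lift (k : nat) : nat -> list nat := fun y => if y <? k then [] else [y - k].
Lemma pre_lift_ok k : pre_ok (fun i => i + k) (pre_lift k).
Proof.
  intros y; unfold pre_lift. destruct (Nat.ltb_spec y k).
  - split; [constructor|]. intros x; simpl; split; [tauto|lia].
  - split; [repeat constructor; simpl; tauto|]. intros x; simpl; split; [intros [<-|[]]; lia|]. lia.
Qed.
Lemma push_lift_lt k G y : y < k -> push (pre_lift k) G y = [].
Proof. intros H; unfold push, pre_lift. destruct (Nat.ltb_spec y k); [reflexivity|lia]. Qed.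
Lemma push_lift_ge k G y : push (pre_lift k) G (y + k) = G y ++ [].
Proof. unfold push, pre_lift. destruct (Nat.ltb_spec (y + k) k); [lia|]. simpl.
  replace (y + k - k) with y by lia. reflexivity. Qed.

Definition pre_pred : nat -> list nat := fun y => match y with 0 => [0;1] | S y => [S (S y)] end.
Lemma pre_pred_ok : pre_ok pred pre_pred.
Proof.
  intros [|y]; simpl.
  - split. repeat constructor; simpl; intuition discriminate.
    intros x; split. intros [<-|[<-|[]]]; reflexivity. destruct x as [|[|x]]; simpl; auto.
  - split. repeat constructor; simpl; tauto.
    intros x; split. intros [<-|[]]; reflexivity. intros Hx. destruct x as [|[|x]]; simpl in *; try discriminate; auto.
Qed.

Lemma root_m_lem G t0 u0 m e sz L : root_m t0 u0 -> deriv G t0 m e sz L ->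
  exists m' sz', deriv G u0 m' e sz' L /\ m' < m.
Proof.
  intros [s t u] Hd.
  inversion Hd as [| | |G1 D ? ? ? m1 e1 s1 m2 e2 s2 M M' ? H1 H2 H3 H4|]; subst.
  apply plugS_inv in H1 as (H&K&mX&eX&sX&mK&eK&sK&HX&HG&->&->&->&Hrep).
  inversion HX as [|?|Gt ? ? mt et st ? ? Ht HM HH| |]; subst.
  assert (Hu := ren_mderiv _ _ _ _ _ _ H2 _ _ (pre_lift_ok (length s))).
  assert (HY : deriv (cunion (ctail Gt) (push (pre_lift (length s)) D)) (Es t (lift (length s) u)) (mX + m2) (eX + e2) (st + s2 + 1) L).
  { eapply D_es; [exact Ht|exact Hu| |apply ctx_eq_refl]. rewrite H3. psolve. }
  eapply Hrep in HY.
  - exists (mX + m2 + mK), (st + s2 + 1 + sK). split; [|lia].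
    eapply deriv_conv; [exact HY| |lia|lia|lia].
    intros y. specialize (H4 y). specialize (HG y). specialize (HH (y + length s)).
    unfold cunion, ctail in *. rewrite push_lift_ge in *. psolve.
  - intros y Hy. specialize (HH y). unfold cunion, ctail in *. rewrite push_lift_lt by auto. psolve.
Qed.

Lemma push_pred G : G 0 = [] -> forall y, Permutation (push pre_pred G y) (G (S y)).
Proof. intros H0 [|y]; unfold push; simpl; rewrite ?H0; simpl; rewrite app_nil_r; apply Permutation_refl. Qed.

Lemma root_gcv_lem G t0 u0 m e sz L : root_gcv t0 u0 -> deriv G t0 m e sz L ->
  exists sz', deriv G u0 m e sz' L /\ sz' < sz.
Proof.
  intros [s t v Hv Hocc] Hd.
  inversion Hd as [| | | |Gt D ? ? ? mt et st m2 e2 s2 M' ? Ht H2 H3 H4]; subst.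
  assert (Gt0 : Gt 0 = []) by (eapply relevance; eauto).
  rewrite Gt0 in H3; simpl in H3.
  apply Permutation_sym, Permutation_length_1_inv in H3; subst.
  inversion H2 as [|? D1 D2 ? m1 e1 s1 m3 e3 s3 ? ? H5 H6 H7]; subst.
  apply mderiv_nil_inv in H6 as (HD2&->&->&->).
  apply plugS_inv in H5 as (H&K&mX&eX&sX&mK&eK&sK&HX&HG&->&->&->&Hrep).
  destruct Hv as [b ->].
  inversion HX as [|? ? HH| | |]; subst.
  assert (Ht1 := ren_deriv _ _ _ _ _ _ Ht _ _ pre_pred_ok).
  assert (Ht2 := ren_deriv _ _ _ _ _ _ Ht1 _ _ (pre_lift_ok (length s))).
  apply Hrep in Ht2.
  - exists (st + sK). split; [|lia].
    eapply deriv_conv; [exact Ht2| |lia|lia|lia].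
    intros y. specialize (H4 y). specialize (HG y). specialize (HH (y + length s)).
    specialize (H7 y). specialize (HD2 y). pose proof (push_pred _ Gt0 y).
    unfold cunion, ctail, cempty in *. rewrite push_lift_ge in *. psolve.
  - intros y Hy. specialize (HH y). unfold cempty in *. rewrite push_lift_lt by auto. psolve.
Qed.

Definition addat (G0 : ctx) (k : nat) (A : mtype) : ctx :=
  fun y => G0 y ++ (if Nat.eqb y k then A else []).

Definition Wconcl w k G m e L := exists A G0 e0, A <> [] /\ ctx_eq G (addat G0 k A) /\ e = e0 + length A /\
   forall Y HY mY eY sY, mderiv HY Y mY eY sY A -> (forall y, y < wdepth w -> HY y = []) ->
   exists sz', deriv (fun y => G0 y ++ HY (y + wdepth w)) (plugW w Y) (m + mY) (e0 + eY) sz' L.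

Lemma nil_split (l l1 l2 : list ltype) : l = [] -> Permutation l (l1 ++ l2) -> l1 = [] /\ l2 = [].
Proof. intros -> H; apply app_eq_nil, Permutation_nil, H. Qed.

Lemma MW w k : (forall G m e sz L, deriv G (plugW w (Var (wdepth w + k))) m e sz L -> Wconcl w k G m e L) ->
 forall D m e sz M, mderiv D (plugW w (Var (wdepth w + k))) m e sz M ->
 exists A G0 e0, (M <> [] -> A <> []) /\ ctx_eq D (addat G0 k A) /\ e = e0 + length A /\
  forall Y HY mY eY sY, mderiv HY Y mY eY sY A -> (forall y, y < wdepth w -> HY y = []) ->
   exists sz', mderiv (fun y => G0 y ++ HY (y + wdepth w)) (plugW w Y) (m + mY) (e0 + eY) sz' M.
Proof.
  intros HW D m e sz M Hd. remember (plugW w (Var (wdepth w + k))) as T eqn:ET.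
  induction Hd as [G T HG|G G1 G2 T m1 e1 s1 m2 e2 s2 L M Hd1 Hd2 IH HG]; subst.
  - exists [], G, 0. split; [tauto|]. split.
    { intros y; unfold addat; destruct (Nat.eqb y k); simpl; rewrite app_nil_r; apply Permutation_refl. }
    split; [reflexivity|]. intros Y HY mY eY sY HYd _.
    apply mderiv_nil_inv in HYd as (HY0&->&->&->). exists 0.
    apply M_nil. intros y; specialize (HG y); specialize (HY0 (y + wdepth w)).
    unfold cempty in *. psolve.
  - destruct (HW _ _ _ _ _ Hd1) as (A1&G01&e01&HA1&HG1&He1&Hr1).
    destruct (IH eq_refl HW) as (A2&G02&e02&HA2&HG2&He2&Hr2).
    exists (A1 ++ A2), (cunion G01 G02), (e01 + e02). split.
    { intros _; destruct A1; [congruence|discriminate]. } split.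
    { intros y; specialize (HG y); specialize (HG1 y); specialize (HG2 y).
      unfold addat, cunion in *. destruct (Nat.eqb y k); psolve. }
    split; [rewrite length_app; lia|].
    intros Y HY mY eY sY HYd HY0.
    apply mderiv_split in HYd as (HY1&HY2&mA&eA&sA&mB&eB&sB&HYd1&HYd2&HYc&->&->&->).
    destruct (Hr1 Y HY1 mA eA sA HYd1 (fun y Hy => proj1 (nil_split _ _ _ (HY0 y Hy) (HYc y)))) as [sz1 D1].
    destruct (Hr2 Y HY2 mB eB sB HYd2 (fun y Hy => proj2 (nil_split _ _ _ (HY0 y Hy) (HYc y)))) as [sz2 D2].
    exists (sz1 + sz2). eapply mderiv_conv. eapply M_cons; [exact D1|exact D2|apply ctx_eq_refl].
    { intros y; specialize (HYc (y + wdepth w)). unfold cunion in *. psolve. }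
    lia. lia. lia.
Qed.

Lemma W_lem : forall w k G m e sz L, deriv G (plugW w (Var (wdepth w + k))) m e sz L -> Wconcl w k G m e L.
Proof.
  induction w as [|w IH u|u w IH|u w IH|w IH u]; intros k G m e sz L Hd; simpl in Hd.
  - inversion Hd as [? ? ? HG| | | |]; subst.
    exists [L], cempty, 0. split; [discriminate|]. split.
    { intros y; specialize (HG y); unfold addat, csingle, cempty in *. simpl.
      destruct (Nat.eqb y k); psolve. }
    split; [reflexivity|]. intros Y HY mY eY sY HYd _.
    inversion HYd as [|? G1 G2 ? m1 e1 s1 m2 e2 s2 ? ? H1 H2 H3]; subst.
    apply mderiv_nil_inv in H2 as (HG2&->&->&->). exists s1. simpl.
    eapply deriv_conv; [exact H1| |lia|lia|lia].
    intros y; specialize (H3 (y + 0)); specialize (HG2 (y + 0)). rewrite Nat.add_0_r in *.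
    unfold cunion, cempty in *; psolve.
  - inversion Hd as [| | |G1 D ? ? ? m1 e1 s1 m2 e2 s2 M M' ? H1 H2 H3 H4|]; subst.
    destruct (IH _ _ _ _ _ _ H1) as (A&G0&e0&HA&HG&He&Hr).
    exists A, (cunion G0 D), (e0 + e2). split; [auto|]. split.
    { intros y; specialize (H4 y); specialize (HG y). unfold addat, cunion in *.
      destruct (Nat.eqb y k); psolve. }
    split; [lia|]. intros Y HY mY eY sY HYd HY0.
    destruct (Hr Y HY mY eY sY HYd HY0) as [sz' HD]. exists (sz' + s2 + 1). simpl.
    eapply deriv_conv. eapply D_app; [exact HD|exact H2|exact H3|apply ctx_eq_refl].
    { intros y; unfold cunion. psolve. } lia. lia. lia.
  - inversion Hd as [| | |G1 D ? ? ? m1 e1 s1 m2 e2 s2 M M' ? H1 H2 H3 H4|]; subst.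
    destruct (MW w k (IH k) _ _ _ _ _ H2) as (A&G0&e0&HA&HG&He&Hr).
    exists A, (cunion G1 G0), (e1 + e0). split.
    { apply HA. intros ->. apply Permutation_nil in H3. apply app_eq_nil in H3 as [_ Hc]; discriminate. }
    split.
    { intros y; specialize (H4 y); specialize (HG y). unfold addat, cunion in *.
      destruct (Nat.eqb y k); psolve. }
    split; [lia|]. intros Y HY mY eY sY HYd HY0.
    destruct (Hr Y HY mY eY sY HYd HY0) as [sz' HD]. exists (s1 + sz' + 1). simpl.
    eapply deriv_conv. eapply D_app; [exact H1|exact HD|exact H3|apply ctx_eq_refl].
    { intros y; unfold cunion. psolve. } lia. lia. lia.
  - inversion Hd as [| | | |G1 D ? ? ? m1 e1 s1 m2 e2 s2 M' ? H1 H2 H3 H4]; subst.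
    destruct (MW w k (IH k) _ _ _ _ _ H2) as (A&G0&e0&HA&HG&He&Hr).
    exists A, (cunion (ctail G1) G0), (e1 + e0). split.
    { apply HA. intros ->. apply Permutation_nil in H3. apply app_eq_nil in H3 as [_ Hc]; discriminate. }
    split.
    { intros y; specialize (H4 y); specialize (HG y). unfold addat, cunion, ctail in *.
      destruct (Nat.eqb y k); psolve. }
    split; [lia|]. intros Y HY mY eY sY HYd HY0.
    destruct (Hr Y HY mY eY sY HYd HY0) as [sz' HD]. exists (s1 + sz' + 1). simpl.
    eapply deriv_conv. eapply D_es; [exact H1|exact HD|exact H3|apply ctx_eq_refl].
    { intros y; unfold cunion, ctail. psolve. } lia. lia. lia.
  - replace (S (wdepth w + k)) with (wdepth w + S k) in Hd by lia.
    inversion Hd as [| | | |G1 D ? ? ? m1 e1 s1 m2 e2 s2 M' ? H1 H2 H3 H4]; subst.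
    destruct (IH _ _ _ _ _ _ H1) as (A&G0&e0&HA&HG&He&Hr).
    exists A, (fun y => G0 (S y) ++ D y), (e0 + e2). split; [auto|]. split.
    { intros y; specialize (H4 y); specialize (HG (S y)). unfold addat, cunion, ctail in *.
      simpl in HG. destruct (Nat.eqb y k); psolve. }
    split; [lia|]. intros Y HY mY eY sY HYd HY0.
    destruct (Hr Y HY mY eY sY HYd (fun y Hy => HY0 y (le_S _ _ Hy))) as [sz' HD].
    exists (sz' + s2 + 1). simpl.
    eapply deriv_conv. eapply D_es; [exact HD|exact H2| |apply ctx_eq_refl].
    { specialize (HG 0). unfold addat in HG. simpl in HG |- *. rewrite (HY0 (wdepth w)) by (simpl; lia). psolve. }
    { intros y; unfold cunion, ctail. replace (S y + wdepth w) with (y + S (wdepth w)) by lia. psolve. }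
    lia. lia. lia.
Qed.

Lemma root_e_lem G t0 u0 m e sz L : root_e t0 u0 -> deriv G t0 m e sz L ->
  exists e' sz', deriv G u0 m e' sz' L /\ e' < e.
Proof.
  intros [w u] Hd.
  inversion Hd as [| | | |G1 D ? ? ? m1 e1 s1 m2 e2 s2 M' ? H1 H2 H3 H4]; subst.
  replace (Var (wdepth w)) with (Var (wdepth w + 0)) in H1 by (f_equal; lia).
  destruct (W_lem _ _ _ _ _ _ _ H1) as (A&G0&e0&HA&HG&He&Hr).
  assert (HP : Permutation M' (A ++ (G0 0 ++ [TN]))).
  { specialize (HG 0). unfold addat in HG. simpl in HG. psolve. }
  apply (mderiv_perm _ _ HP) in H2.
  apply mderiv_split in H2 as (DA&DR&mA&eA&sA&mR&eR&sR&HDA&HDR&HDc&->&->&->).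
  assert (HY := ren_mderiv _ _ _ _ _ _ HDA _ _ (pre_lift_ok (S (wdepth w)))).
  destruct (Hr _ _ _ _ _ HY) as [sz' HD].
  { intros y Hy. apply push_lift_lt. lia. }
  exists (e0 + eA + eR), (sz' + sR + 1). split.
  2:{ destruct A; [congruence|]. simpl in He. lia. }
  eapply deriv_conv. eapply D_es; [exact HD|exact HDR| |apply ctx_eq_refl].
  { simpl. rewrite push_lift_lt by lia. rewrite app_nil_r. apply Permutation_refl. }
  { intros y. specialize (H4 y). specialize (HG (S y)). specialize (HDc y).
    unfold cunion, ctail, addat in *. simpl in HG.
    replace (S y + wdepth w) with (y + S (wdepth w)) by lia. rewrite push_lift_ge. psolve. }
  lia. lia. lia.
Qed.

Definition pres (R : nat->nat->nat->nat->nat->nat->Prop) t0 u0 :=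
  forall G m e s L, deriv G t0 m e s L -> exists m' e' s', deriv G u0 m' e' s' L /\ R m e s m' e' s'.

Definition Rsh (R : nat->nat->nat->nat->nat->nat->Prop) := forall m e s m' e' s' a b c,
  R m e s m' e' s' -> R (a+m) (b+e) (c+s) (a+m') (b+e') (c+s').
Definition Radd (R : nat->nat->nat->nat->nat->nat->Prop) := forall m1 e1 s1 m1' e1' s1' m2 e2 s2 m2' e2' s2',
  R m1 e1 s1 m1' e1' s1' -> R m2 e2 s2 m2' e2' s2' -> R (m1+m2) (e1+e2) (s1+s2) (m1'+m2') (e1'+e2') (s1'+s2').

Lemma Rc R : Rsh R -> forall m e s m' e' s' X Y Z X' Y' Z', R m e s m' e' s' ->
  m <= X -> m' <= X' -> X - m = X' - m' ->
  e <= Y -> e' <= Y' -> Y - e = Y' - e' ->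
  s <= Z -> s' <= Z' -> Z - s = Z' - s' -> R X Y Z X' Y' Z'.
Proof.
  intros HR m e s m' e' s' X Y Z X' Y' Z' H; intros.
  replace X with ((X - m) + m) by lia. replace X' with ((X - m) + m') by lia.
  replace Y with ((Y - e) + e) by lia. replace Y' with ((Y - e) + e') by lia.
  replace Z with ((Z - s) + s) by lia. replace Z' with ((Z - s) + s') by lia.
  apply HR; auto.
Qed.

Lemma pres_m R X Y : Rsh R -> Radd R -> pres R X Y -> forall D m e s M, mderiv D X m e s M ->
  exists m' e' s', mderiv D Y m' e' s' M /\ ((m' = m /\ e' = e /\ s' = s /\ M = []) \/ R m e s m' e' s').
Proof.
  intros HS HA HP D m e s M Hd. remember X as T eqn:ET.
  induction Hd as [G T HG|G G1 G2 T m1 e1 s1 m2 e2 s2 L M Hd1 Hd2 IH HG]; subst.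
  - exists 0, 0, 0. split; [apply M_nil; auto|]. left; auto.
  - destruct (HP _ _ _ _ _ Hd1) as (m1'&e1'&s1'&D1&R1).
    destruct (IH eq_refl HP) as (m2'&e2'&s2'&D2&R2).
    exists (m1' + m2'), (e1' + e2'), (s1' + s2'). split; [eapply M_cons; eauto|]. right.
    destruct R2 as [(->&->&->&_)|R2].
    + eapply Rc; eauto; lia.
    + apply HA; auto.
Qed.

Lemma nonnil_perm (M' M : mtype) : Permutation M' (M ++ [TN]) -> M' <> [].
Proof. intros H ->. apply Permutation_nil in H. apply app_eq_nil in H as [_ H]; discriminate. Qed.

Lemma closure R t0 u0 : Rsh R -> Radd R -> pres R t0 u0 -> forall w, pres R (plugW w t0) (plugW w u0).
Proof.
  intros HS HA HP w. induction w as [|w IH u|u w IH|u w IH|w IH u]; intros G m e s L Hd; simpl in *.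
  - auto.
  - inversion Hd as [| | |G1 D ? ? ? m1 e1 s1 m2 e2 s2 M M' ? H1 H2 H3 H4|]; subst.
    destruct (IH _ _ _ _ _ H1) as (m'&e'&s'&D1&R1).
    exists (m' + m2 + 1), (e' + e2), (s' + s2 + 1). split.
    + eapply D_app; eauto.
    + eapply Rc; eauto; lia.
  - inversion Hd as [| | |G1 D ? ? ? m1 e1 s1 m2 e2 s2 M M' ? H1 H2 H3 H4|]; subst.
    destruct (pres_m R _ _ HS HA IH _ _ _ _ _ H2) as (m'&e'&s'&D2&R2).
    exists (m1 + m' + 1), (e1 + e'), (s1 + s' + 1). split.
    + eapply D_app; eauto.
    + destruct R2 as [(_&_&_&E)|R2]; [exfalso; eapply nonnil_perm; eauto|].
      eapply Rc; eauto; lia.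
  - inversion Hd as [| | | |G1 D ? ? ? m1 e1 s1 m2 e2 s2 M' ? H1 H2 H3 H4]; subst.
    destruct (pres_m R _ _ HS HA IH _ _ _ _ _ H2) as (m'&e'&s'&D2&R2).
    exists (m1 + m'), (e1 + e'), (s1 + s' + 1). split.
    + eapply D_es; eauto.
    + destruct R2 as [(_&_&_&E)|R2]; [exfalso; eapply nonnil_perm; eauto|].
      eapply Rc; eauto; lia.
  - inversion Hd as [| | | |G1 D ? ? ? m1 e1 s1 m2 e2 s2 M' ? H1 H2 H3 H4]; subst.
    destruct (IH _ _ _ _ _ H1) as (m'&e'&s'&D1&R1).
    exists (m' + m2), (e' + e2), (s' + s2 + 1). split.
    + eapply D_es; eauto.
    + eapply Rc; eauto; lia.
Qed.

Theorem proposition6p1 (G : ctx) (t : term) (m e s : nat) (L : ltype) :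
  deriv G t m e s L ->
  (forall u, wm t u ->
     1 <= m /\ exists m' s', deriv G u m' e s' L /\ m > m') /\
  (forall u, we t u ->
     1 <= e /\ exists e' s', deriv G u m e' s' L /\ e > e') /\
  (forall u, wgcv t u ->
     exists s', deriv G u m e s' L /\ s > s').
Proof.
  intros Hd. split; [|split].
  - intros u (w&t0&u0&Hr&->&->).
    set (R := fun (m e s m' e' s' : nat) => m' < m /\ e' = e).
    assert (HS : Rsh R) by (unfold Rsh, R; intros; lia).
    assert (HA : Radd R) by (unfold Radd, R; intros; lia).
    assert (HP : pres R t0 u0).
    { intros G' m0 e0 s0 L0 H. destruct (root_m_lem _ _ _ _ _ _ _ Hr H) as (m'&sz'&D&Hlt).
      exists m', e0, sz'. split; auto. unfold R; auto. }
    destruct (closure R _ _ HS HA HP w _ _ _ _ _ Hd) as (m'&e'&s'&D&[Hlt ->]).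
    split; [lia|]. exists m', s'. auto.
  - intros u (w&t0&u0&Hr&->&->).
    set (R := fun (m e s m' e' s' : nat) => e' < e /\ m' = m).
    assert (HS : Rsh R) by (unfold Rsh, R; intros; lia).
    assert (HA : Radd R) by (unfold Radd, R; intros; lia).
    assert (HP : pres R t0 u0).
    { intros G' m0 e0 s0 L0 H. destruct (root_e_lem _ _ _ _ _ _ _ Hr H) as (e'&sz'&D&Hlt).
      exists m0, e', sz'. split; auto. unfold R; auto. }
    destruct (closure R _ _ HS HA HP w _ _ _ _ _ Hd) as (m'&e'&s'&D&[Hlt ->]).
    split; [lia|]. exists e', s'. auto.
  - intros u (w&t0&u0&Hr&->&->).
    set (R := fun (m e s m' e' s' : nat) => s' < s /\ m' = m /\ e' = e).
    assert (HS : Rsh R) by (unfold Rsh, R; intros; lia).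
    assert (HA : Radd R) by (unfold Radd, R; intros; lia).
    assert (HP : pres R t0 u0).
    { intros G' m0 e0 s0 L0 H. destruct (root_gcv_lem _ _ _ _ _ _ _ Hr H) as (sz'&D&Hlt).
      exists m0, e0, sz'. split; auto. unfold R; auto. }
    destruct (closure R _ _ HS HA HP w _ _ _ _ _ Hd) as (m'&e'&s'&D&[Hlt [-> ->]]).
    exists s'. auto.
Qed.
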